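(* Let $\mathrm{k}$ be an infinite field. For $n\in\{2,3\}$ and $P\in\mathrm{k}[T]$ with $\deg P\geq2$, the $\mathrm{k}$-algebra $\mathrm{k}[T]/(P^n)$ has infinitely many subalgebras.
   Context: Subalgebras are unital (contain $1$). *)

(* Defs.v *)
From HB Require Import structures.
From mathcomp Require Import all_boot all_order all_algebra.
Set Implicit Arguments.
Unset Strict Implicit.
Unset Printing Implicit Defensive.
Import GRing.Theory.
Local Open Scope ring_scope.

Definition infinite_field (F : fieldType) : Prop :=
  forall s : seq F, exists x : F, x \notin s.

Definition monic_gen (F : fieldType) (q : {poly F}) : {poly F} :=
  (lead_coef q)^-1 *: q.

(* The F-algebra F[T]/(q), realized via mathcomp's qpoly on the monic
   generator of (q) (qpoly requires a monic modulus). *)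
Definition quot_alg (F : fieldType) (q : {poly F}) := {poly %/ monic_gen q}.

Definition is_subalgebra (F : fieldType) (q : {poly F})
  (U : {vspace quot_alg q}) : Prop :=
  (1 \in U) /\ (forall x y : quot_alg q, x \in U -> y \in U -> x * y \in U).

Definition infinitely_many_subalgebras (F : fieldType) (q : {poly F}) : Prop :=
  forall s : seq {vspace quot_alg q},
    exists U : {vspace quot_alg q}, is_subalgebra U /\ U \notin s.

(* Main.v *)
Require Import Defs.
From mathcomp Require Import all_boot all_order all_algebra.
From mathcomp Require Import ring zify.
Local Open Scope ring_scope.
Import GRing.Theory.
Import Pdiv.RingMonic.

Lemma distinct_list (k : fieldType) : infinite_field k ->
  forall m : nat, exists cs : seq k, uniq cs /\ size cs = m.
Proof.
move=> inf; elim=> [|m [cs [u s]]]; first by exists [::].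
have [x xn] := inf cs; exists (x :: cs); by rewrite /= xn u s.
Qed.

Lemma key (k : fieldType) (Q R W : {poly k}) :
  infinite_field k -> Q != 0 -> R * R = Q * W -> (2 < size R)%N ->
  ((size R).+1 < size Q)%N -> infinitely_many_subalgebras Q.
Proof.
move=> inf Q0 RRQ sR sRQ.
have lQ : lead_coef Q != 0 by rewrite lead_coef_eq0.
pose M := monic_gen Q.
have Mmon : M \is monic by rewrite monicE /M /monic_gen lead_coefZ mulVf.
have sM : size M = size Q by rewrite /M /monic_gen size_scale ?invr_eq0.
have mkM : mk_monic M = M.
  by rewrite /mk_monic sM Mmon andbT ifT //; lia.
have R0 : R != 0 by rewrite -size_poly_gt0; apply: leq_trans sR.
pose v (c : k) : quot_alg Q := in_qpoly M (R * ('X + c%:P)).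
have vE c : (v c : {poly k}) = R * ('X + c%:P).
  rewrite in_qpoly_small // mkM sM size_mul // ?size_XaddC //.
    by rewrite addn2 /=.
  by apply/negP => /eqP H; have := size_XaddC c; rewrite H size_poly0.
have vv c : v c * v c = 0.
  have vE' : Pdiv.CommonRing.rmodp (R * ('X + c%:P)) (mk_monic M) = R * ('X + c%:P) := vE c.
  apply: val_inj => /=; rewrite vE' -/M mkM.
  have -> : R * ('X + c%:P) * (R * ('X + c%:P)) =
            (lead_coef Q *: (W * ('X + c%:P) ^+ 2)) * M.
    rewrite /M /monic_gen -scalerAl scalerAr scalerA mulfV // scale1r.
    have -> : R * ('X + c%:P) * (R * ('X + c%:P)) = (R * R) * ('X + c%:P) ^+ 2
      by ring.
    rewrite RRQ; ring.
  by rewrite rmodp_mull.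
pose U (c : k) : {vspace quot_alg Q} := (<[1 : quot_alg Q]> + <[v c]>)%VS.
have U1 c : 1 \in U c.
  by rewrite -[1]addr0; apply: memv_add; [exact: memv_line | exact: mem0v].
have Uv c : v c \in U c.
  by rewrite -[v c]add0r; apply: memv_add; [exact: mem0v | exact: memv_line].
have Usub c : is_subalgebra (U c).
  split=> // x y /memv_addP[x1 /vlineP[a ->] [x2 /vlineP[b ->] ->]].
  move=> /memv_addP[y1 /vlineP[a' ->] [y2 /vlineP[b' ->] ->]].
  rewrite !(mulrDl, mulrDr) -!scalerAl -!scalerAr mul1r mulr1 mul1r vv.
  by rewrite !scaler0 addr0 !memvD ?memvZ.
have Uinj c c' : U c = U c' -> c = c'.
  move=> E; have := Uv c; rewrite E.
  move=> /memv_addP[x1 /vlineP[a ->] [x2 /vlineP[b ->]]] /(congr1 val) /=.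
  have vE'' c0 : Pdiv.CommonRing.rmodp (R * ('X + c0%:P)) (mk_monic M) = R * ('X + c0%:P) := vE c0.
  rewrite !vE'' => H.
  pose q := (1 - b%:P) * 'X + (c%:P - b%:P * c'%:P).
  have Hq : R * q = a%:P.
    have -> : R * q = R * ('X + c%:P) - b%:P * (R * ('X + c'%:P)) by rewrite /q; ring.
    by rewrite H -!mul_polyC polyC1 mulr1 addrK.
  have q0 : q = 0.
    apply/eqP; apply: contraTT sR => qn0; rewrite -ltnNge.
    move: (size_polyC a); rewrite -Hq size_mul //.
    have : (0 < size q)%N by rewrite size_poly_gt0.
    by case: (a == 0) => /= h1; rewrite -subn1 => h2; set x := size R in h2 *; set y := size q in h1 h2; lia.
  have h1 : q`_1 = 0 by rewrite q0 coef0.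
  have h0 : q`_0 = 0 by rewrite q0 coef0.
  move: h1 h0; rewrite /q /= !coefE /=.
  move=> e1 e2.
  have b1 : b = 1.
    by move: e1; rewrite mulr0 subr0 addr0 => /eqP; rewrite subr_eq0 => /eqP <-.
  by move: e2; rewrite add0r b1 mul1r => /eqP; rewrite subr_eq0 => /eqP.
move=> s.
have [cs [ucs scs]] := @distinct_list k inf (size s).+1.
case: (boolP (all (fun c => U c \in s) cs)) => [/allP hall|].
  exfalso.
  have : (size (map U cs) <= size s)%N.
    apply: uniq_leq_size.
      by rewrite map_inj_in_uniq // => x y _ _; exact: Uinj.
    by move=> x /mapP[c cin ->]; exact: hall.
  by rewrite size_map scs ltnn.
rewrite -has_predC => /hasP[c _ /= nin].
by exists (U c); split.
Qed.

Theorem lemma3p6 (k : fieldType) (n : nat) (P : {poly k}) :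
  infinite_field k ->
  (n == 2)%N || (n == 3)%N ->
  (2 < size P)%N ->
  infinitely_many_subalgebras (P ^+ n).
Proof.
move=> inf hn sP.
have P0 : P != 0 by rewrite -size_poly_gt0; apply: leq_trans sP.
have Q0 : P ^+ n != 0 by rewrite expf_neq0.
have se m : size (P ^+ m) = ((size P).-1 * m).+1.
  by rewrite -(size_exp P m) prednK // size_poly_gt0 expf_neq0.
case/orP: hn => /eqP ->.
  apply: (@key k (P ^+ 2) P 1) => //; first by rewrite expf_neq0.
    by ring.
  rewrite se; move: sP; case: (size P) => [|[|[|d]]] //= _; lia.
apply: (@key k (P ^+ 3) (P ^+ 2) P) => //; first by rewrite expf_neq0.
  by ring.
all: rewrite !se; move: sP; case: (size P) => [|[|[|d]]] //= _; lia.
Qed.
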